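(* Let $b>1$ be an integer, let $H$ be a generalized $b$-happy function with digit mean $\mu$ and digit standard deviation $\sigma$, and let $C\subseteq\mathbb{N}$. Assume there is a positive integer $n_1$ satisfying bound (B): (B1) $4\left(1+3\mu+\sqrt{2}\,\sigma\, b^{5n_1/8}\right)\le b^{n_1-1}$, (B2) $\sqrt{3\mu b}\,\sigma\le b^{3n_1/8}$, (B3) $4\mu\left(3\mu+1+b^{3n_1/4}+2\sigma\mu^{-1/2}b^{5n_1/8}\right)\le b^{n_1-1}$, and an $n_1$-strict interval $I_1$ with type-$C$ density $d_1$. Then for every $N\in\mathbb{N}$ there exist an integer $n>N$ and an $n$-strict interval $I$ whose type-$C$ density is at least $$d_1\exp\!\left(-\frac{2}{b^{n_1/4}-1}-\frac{4\sigma}{\sqrt{\mu}\,\left(b^{n_1/8}-1\right)}\right).$$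
   Context: A generalized $b$-happy function: fix an integer $b>1$ and non-negative integers $h(0),\dots,h(b-1)$ with $h(0)=0$, $h(1)=1$; for $n=\sum_{i=0}^k a_ib^i$ in base $b$, $H(n)=\sum_{i=0}^k h(a_i)$. Digit mean $\mu=\frac1b\sum_{j=0}^{b-1}h(j)$, digit variance $\sigma^2=\frac1b\sum_{j=0}^{b-1}(h(j)-\mu)^2$. An integer $n$ is type-$C$ if $H^k(n)\in C$ for some integer $k\ge0$. An integer interval $[a,c]$ is the set of integers $x$ with $a\le x\le c$; $|I|$ is its cardinality. The type-$C$ density of a finite nonempty integer interval $I$ is $|\{n\in I:n\text{ type-}C\}|/|I|$. For a positive integer $m$, an integer interval $I$ is $m$-strict if $I\subseteq[b^{m-1},b^m-1]$ and $|I|=b^{3m/4}$. *)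

(* Defs.v *)
From Stdlib Require Import Reals Lra Lia Arith List ClassicalEpsilon.
Open Scope R_scope.

(* Generalized b-happy function: H(n) = sum of h(a_i) over the base-b digits
   a_i of n.  [Hfuel f b h n] peels off f digits; fuel n suffices for b >= 2
   since n / b < n for n > 0. *)
Fixpoint Hfuel (fuel b : nat) (h : nat -> nat) (n : nat) : nat :=
  match fuel with
  | O => O
  | S f => if Nat.eqb n 0 then O else (h (n mod b) + Hfuel f b h (n / b))%nat
  end.

Definition happyH (b : nat) (h : nat -> nat) (n : nat) : nat := Hfuel n b h n.

Definition digit_mean (b : nat) (h : nat -> nat) : R :=
  (/ INR b) * fold_right Rplus 0 (map (fun j => INR (h j)) (seq 0 b)).

Definition digit_variance (b : nat) (h : nat -> nat) : R :=
  (/ INR b) * fold_right Rplus 0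
     (map (fun j => (INR (h j) - digit_mean b h) ^ 2) (seq 0 b)).

Definition digit_sd (b : nat) (h : nat -> nat) : R := sqrt (digit_variance b h).

Definition typeC (b : nat) (h : nat -> nat) (C : nat -> Prop) (n : nat) : Prop :=
  exists k : nat, C (Nat.iter k (happyH b h) n).

(* The integer interval [a, c]; its cardinality is (c + 1 - a) (0 if c < a). *)
Definition icard (a c : nat) : nat := (S c - a)%nat.

Definition indicator (P : Prop) : nat :=
  if excluded_middle_informative P then 1%nat else 0%nat.

Definition typeC_count (b : nat) (h : nat -> nat) (C : nat -> Prop) (a c : nat) : nat :=
  fold_right Nat.add 0%nat
    (map (fun x => indicator (typeC b h C x)) (seq a (icard a c))).

Definition typeC_density (b : nat) (h : nat -> nat) (C : nat -> Prop) (a c : nat) : R :=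
  INR (typeC_count b h C a c) / INR (icard a c).

Definition strict_interval (b m a c : nat) : Prop :=
  (b ^ (m - 1) <= a)%nat /\ (c <= b ^ m - 1)%nat /\
  INR (icard a c) = Rpower (INR b) (3 * INR m / 4).

(* Main.v *)
Require Import Defs.
From Stdlib Require Import Reals Lra Lia Psatz Arith List Classical ClassicalEpsilon ZArith.
Open Scope R_scope.

Fixpoint sm (f : nat -> nat) (s n : nat) : nat :=
  match n with O => O | S n' => (f s + sm f (S s) n')%nat end.

Lemma fold_sm f s n : fold_right Nat.add 0%nat (map f (seq s n)) = sm f s n.
Proof. revert s; induction n; intros s; simpl; auto. Qed.

Lemma sm_ext f g s n : (forall i, (s <= i < s + n)%nat -> f i = g i) -> sm f s n = sm g s n.
Proof. revert s; induction n; intros s H; simpl; auto.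
  rewrite (H s) by lia. rewrite (IHn (S s)); auto. intros; apply H; lia. Qed.

Lemma sm_le f g s n : (forall i, (s <= i < s + n)%nat -> (f i <= g i)%nat) -> (sm f s n <= sm g s n)%nat.
Proof. revert s; induction n; intros s H; simpl; auto.
  specialize (IHn (S s)). assert (f s <= g s)%nat by (apply H; lia).
  assert (sm f (S s) n <= sm g (S s) n)%nat by (apply IHn; intros; apply H; lia). lia. Qed.

Lemma sm_split f s p q : sm f s (p + q) = (sm f s p + sm f (s + p) q)%nat.
Proof. revert s; induction p; intros s; simpl. rewrite Nat.add_0_r; auto.
  rewrite IHp. replace (S s + p)%nat with (s + S p)%nat by lia. lia. Qed.

Lemma sm_shift f s d n : sm f (s + d) n = sm (fun i => f (i + d)%nat) s n.
Proof. revert s; induction n; intros s; simpl; auto. rewrite <- IHn. f_equal. Qed.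

Lemma sm_add f g s n : sm (fun i => f i + g i)%nat s n = (sm f s n + sm g s n)%nat.
Proof. revert s; induction n; intros s; simpl; auto; rewrite IHn; lia. Qed.

Lemma sm_const c s n : sm (fun _ => c) s n = (n * c)%nat.
Proof. revert s; induction n; intros s; simpl; auto; rewrite IHn; lia. Qed.

Lemma sm_swap (F : nat -> nat -> nat) s1 n1 s2 n2 :
  sm (fun i => sm (F i) s2 n2) s1 n1 = sm (fun j => sm (fun i => F i j) s1 n1) s2 n2.
Proof. revert s1; induction n1; intros s1; simpl.
  - rewrite (sm_const 0 s2 n2). lia.
  - rewrite IHn1. rewrite <- sm_add. apply sm_ext. intros. simpl. reflexivity. Qed.

Lemma sm_mul c f s n : sm (fun i => c * f i)%nat s n = (c * sm f s n)%nat.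
Proof. revert s; induction n; intros s; simpl; auto; rewrite IHn; lia. Qed.

Lemma pigeon f s n X : (0 < n)%nat -> (X <= sm f s n)%nat ->
  exists i, (s <= i < s + n)%nat /\ (X <= n * f i)%nat.
Proof.
  intros Hn HX. destruct (Nat.eq_dec X 0) as [->|HX0].
  { exists s; split; lia. }
  apply NNPP; intros Hno.
  assert (Hall : forall i, (s <= i < s + n)%nat -> (n * f i <= X - 1)%nat).
  { intros i Hi. destruct (le_lt_dec X (n * f i)); [|lia]. exfalso; apply Hno; exists i; split; auto. }
  pose proof (sm_le _ _ s n Hall) as H1. rewrite sm_const, sm_mul in H1.
  assert (n * X <= n * sm f s n)%nat by (apply Nat.mul_le_mono_l; auto). nia.
Qed.

Lemma Hfuel_enough b h (Hb : (2 <= b)%nat) : forall f1 f2 y, (y <= f1)%nat -> (y <= f2)%nat ->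
  Hfuel f1 b h y = Hfuel f2 b h y.
Proof.
  induction f1; intros f2 y H1 H2.
  - assert (y = 0)%nat by lia. subst. destruct f2; simpl; auto.
  - destruct f2.
    + assert (y = 0)%nat by lia. subst. simpl. auto.
    + simpl. destruct (Nat.eqb y 0) eqn:E; auto.
      apply Nat.eqb_neq in E. f_equal. apply IHf1.
      * assert (y / b < y)%nat by (apply Nat.div_lt; lia). lia.
      * assert (y / b < y)%nat by (apply Nat.div_lt; lia). lia.
Qed.

Lemma H_digit b h (Hb : (2 <= b)%nat) (H0 : h 0%nat = 0%nat) q r : (r < b)%nat ->
  happyH b h (q * b + r) = (h r + happyH b h q)%nat.
Proof.
  intros Hr. unfold happyH.
  destruct (q * b + r)%nat eqn:E.
  - assert (q = 0 /\ r = 0)%nat as [-> ->] by nia. rewrite H0. reflexivity.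
  - simpl. rewrite <- E.
    assert (((q * b + r) mod b)%nat = r) as -> by (rewrite Nat.add_comm, Nat.Div0.mod_add; apply Nat.mod_small; auto).
    assert (((q * b + r) / b)%nat = q) as -> by (rewrite Nat.add_comm, Nat.div_add by lia; rewrite Nat.div_small; auto).
    f_equal. apply Hfuel_enough; auto. nia.
Qed.

Lemma H_concat b h (Hb : (2 <= b)%nat) (H0 : h 0%nat = 0%nat) P : forall L y, (y < b ^ L)%nat ->
  happyH b h (P * b ^ L + y) = (happyH b h P + happyH b h y)%nat.
Proof.
  induction L; intros y Hy.
  - simpl in *. assert (y = 0)%nat by lia. subst. rewrite Nat.mul_1_r, Nat.add_0_r.
    replace (happyH b h 0) with 0%nat by reflexivity; lia.
  - set (q := (y / b)%nat). set (r := (y mod b)%nat).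
    assert (Ey : y = (q * b + r)%nat) by (unfold q, r; rewrite Nat.mul_comm; apply Nat.div_mod; lia).
    assert (Hr : (r < b)%nat) by (apply Nat.mod_upper_bound; lia).
    assert (Hq : (q < b ^ L)%nat).
    { simpl in Hy. rewrite Ey in Hy. nia. }
    replace (P * b ^ S L + y)%nat with ((P * b ^ L + q) * b + r)%nat by (rewrite Ey; simpl; nia).
    rewrite H_digit by auto. rewrite IHL by auto. rewrite Ey, H_digit by auto. lia.
Qed.

Fixpoint rep (b s : nat) : nat := match s with O => O | S s' => (rep b s' * b + 1)%nat end.

Lemma H_rep b h (Hb : (2 <= b)%nat) (H0 : h 0%nat = 0%nat) (H1 : h 1%nat = 1%nat) s :
  happyH b h (rep b s) = s.
Proof. induction s; simpl. reflexivity. rewrite H_digit by (auto; lia). rewrite IHs, H1. lia. Qed.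

Lemma rep_bounds b (Hb : (2 <= b)%nat) s : (1 <= s)%nat -> (b ^ (s - 1) <= rep b s < b ^ s)%nat.
Proof.
  induction s; intros Hs. lia.
  destruct s. simpl. lia.
  specialize (IHs ltac:(lia)). change (rep b (S (S s))) with (rep b (S s) * b + 1)%nat. replace (S (S s) - 1)%nat with (S s) by lia.
  replace (S s - 1)%nat with s in IHs by lia. change (b ^ S (S s))%nat with (b * b ^ S s)%nat.
  change (b ^ S s)%nat with (b * b ^ s)%nat in *. set (x := (b ^ s)%nat) in *. set (y := rep b (S s)) in *. destruct IHs as [I1 I2]. split; [nia|]. assert (y * b + 1 <= (b * x - 1) * b + 1)%nat by nia. nia.
Qed.

Fixpoint smR (f : nat -> R) (s n : nat) : R :=
  match n with O => 0 | S n' => f s + smR f (S s) n' end.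

Lemma fold_smR f s n : fold_right Rplus 0 (map f (seq s n)) = smR f s n.
Proof. revert s; induction n; intros s; simpl; auto. rewrite IHn; auto. Qed.

Lemma smR_ext f g s n : (forall i, (s <= i < s + n)%nat -> f i = g i) -> smR f s n = smR g s n.
Proof. revert s; induction n; intros s H; simpl; auto.
  rewrite (H s) by lia. rewrite (IHn (S s)); auto. intros; apply H; lia. Qed.

Lemma smR_le f g s n : (forall i, (s <= i < s + n)%nat -> f i <= g i) -> smR f s n <= smR g s n.
Proof. revert s; induction n; intros s H; simpl. lra.
  assert (f s <= g s) by (apply H; lia).
  assert (smR f (S s) n <= smR g (S s) n) by (apply IHn; intros; apply H; lia). lra. Qed.

Lemma smR_split f s p q : smR f s (p + q) = smR f s p + smR f (s + p) q.
Proof. revert s; induction p; intros s; simpl. rewrite Nat.add_0_r; lra.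
  rewrite IHp. replace (S s + p)%nat with (s + S p)%nat by lia. lra. Qed.

Lemma smR_shift f s d n : smR f (s + d) n = smR (fun i => f (i + d)%nat) s n.
Proof. revert s; induction n; intros s; simpl; auto. rewrite <- IHn. f_equal. Qed.

Lemma smR_add f g s n : smR (fun i => f i + g i) s n = smR f s n + smR g s n.
Proof. revert s; induction n; intros s; simpl. lra. rewrite IHn; lra. Qed.

Lemma smR_scal c f s n : smR (fun i => c * f i) s n = c * smR f s n.
Proof. revert s; induction n; intros s; simpl. lra. rewrite IHn; lra. Qed.

Lemma smR_const c s n : smR (fun _ => c) s n = INR n * c.
Proof. revert s; induction n; intros s; [simpl; lra|].
  change (smR (fun _ => c) s (S n)) with (c + smR (fun _ => c) (S s) n). rewrite IHn, S_INR; lra. Qed.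

Lemma INR_sm f s n : INR (sm f s n) = smR (fun i => INR (f i)) s n.
Proof. revert s; induction n; intros s; [simpl; auto|].
  change (sm f s (S n)) with (f s + sm f (S s) n)%nat. rewrite plus_INR, IHn; auto. Qed.

Lemma smR_block g b N : smR g 0 (N * b) = smR (fun q => smR (fun r => g (q * b + r)%nat) 0 b) 0 N.
Proof.
  induction N. simpl. auto.
  replace (S N * b)%nat with (N * b + b)%nat by lia.
  rewrite smR_split, IHN. replace (S N) with (N + 1)%nat by lia. rewrite smR_split.
  simpl. rewrite (smR_shift g 0 (N * b)). f_equal. rewrite Rplus_0_r.
  apply smR_ext. intros. f_equal. lia.
Qed.

Section Var.
Variables (b : nat) (h : nat -> nat).
Hypothesis Hb : (2 <= b)%nat.
Hypothesis H0 : h 0%nat = 0%nat.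

Let mu := digit_mean b h.
Let v := digit_variance b h.

Lemma sum_dev0 : smR (fun r => INR (h r) - mu) 0 b = 0.
Proof.
  unfold mu, digit_mean. rewrite fold_smR.
  rewrite (smR_add (fun r => INR (h r)) (fun _ => - (/ INR b * smR (fun j => INR (h j)) 0 b))).
  rewrite smR_const. assert (INR b <> 0) by (apply not_0_INR; lia). field; auto.
Qed.

Lemma sum_dev2 : smR (fun r => (INR (h r) - mu) ^ 2) 0 b = INR b * v.
Proof.
  unfold v, digit_variance. rewrite fold_smR. fold mu.
  assert (INR b <> 0) by (apply not_0_INR; lia). field; auto.
Qed.

Lemma S2_formula L : smR (fun y => (INR (happyH b h y) - INR L * mu) ^ 2) 0 (b ^ L)
   = INR L * v * INR b ^ L.
Proof.
  induction L.
  - simpl. replace (happyH b h 0) with 0%nat by reflexivity. simpl. lra.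
  - replace (b ^ S L)%nat with (b ^ L * b)%nat by (simpl; lia).
    rewrite smR_block.
    transitivity (smR (fun q => INR b * v + 2 * (INR (happyH b h q) - INR L * mu) * 0
                       + INR b * (INR (happyH b h q) - INR L * mu) ^ 2) 0 (b ^ L)).
    + apply smR_ext. intros q _.
      set (D := INR (happyH b h q) - INR L * mu).
      transitivity (smR (fun r => (INR (h r) - mu) ^ 2 + (2 * D) * (INR (h r) - mu) + (fun _ => D ^ 2) r) 0 b).
      * apply smR_ext. intros r Hr. rewrite H_digit by (auto; lia).
        rewrite plus_INR, S_INR. unfold D. simpl. ring.
      * rewrite !smR_add, smR_scal, smR_const, sum_dev0, sum_dev2. reflexivity.
    + rewrite !smR_add, smR_const, smR_scal.
      rewrite IHL. rewrite pow_INR, S_INR. simpl. rewrite (smR_ext _ (fun _ => 0)) by (intros; ring). rewrite smR_const. ring.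
Qed.
End Var.

Lemma ind_mono (P Q : Prop) : (P -> Q) -> (indicator P <= indicator Q)%nat.
Proof. intros H. unfold indicator.
  destruct (excluded_middle_informative P), (excluded_middle_informative Q); auto; tauto. Qed.

Lemma ind_le1 (P : Prop) : (indicator P <= 1)%nat.
Proof. unfold indicator. destruct (excluded_middle_informative P); auto. Qed.

Lemma typeC_H b h C x : typeC b h C (happyH b h x) -> typeC b h C x.
Proof. intros [k Hk]. exists (S k). rewrite Nat.iter_succ_r. auto. Qed.

Lemma sm_sub f s n a m : (s <= a)%nat -> (a + m <= s + n)%nat -> (sm f a m <= sm f s n)%nat.
Proof.
  intros H1 H2.
  replace n with ((a - s) + (m + (s + n - (a + m))))%nat by lia.
  rewrite sm_split, sm_split. replace (s + (a - s))%nat with a by lia. lia.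
Qed.

Lemma shift_avg (U : nat -> Prop) (G : nat -> nat) (good : nat -> bool) (Y a c slo k : nat) :
  (slo <= k)%nat -> (a <= S c)%nat ->
  (forall y, (y < Y)%nat -> good y = true -> (slo + G y <= a)%nat /\ (c <= k + G y)%nat) ->
  exists s, (slo <= s <= k)%nat /\
    (sm (fun y => if good y then 1 else 0)%nat 0 Y * sm (fun z => indicator (U z)) a (S c - a)
      <= (S k - slo) * sm (fun y => indicator (U (s + G y))) 0 Y)%nat.
Proof.
  intros Hsk Hac Hg.
  set (T := sm (fun z => indicator (U z)) a (S c - a)).
  assert (Hsum : (sm (fun y => if good y then 1 else 0)%nat 0 Y * T <=
      sm (fun s => sm (fun y => indicator (U (s + G y))) 0 Y) slo (S k - slo))%nat).
  { rewrite sm_swap. rewrite Nat.mul_comm, <- sm_mul. apply sm_le. intros y Hy.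
    destruct (good y) eqn:E.
    - rewrite Nat.mul_1_r. destruct (Hg y ltac:(lia) E) as [G1 G2].
      transitivity (sm (fun z => indicator (U z)) (slo + G y) (S k - slo)).
      + unfold T. apply sm_sub; lia.
      + rewrite sm_shift. apply Nat.eq_le_incl. reflexivity.
    - lia. }
  destruct (pigeon _ slo (S k - slo) _ ltac:(lia) Hsum) as [s [Hs1 Hs2]].
  exists s. split; [lia|]. auto.
Qed.

Lemma cheb (g : nat -> nat) (m t : R) Y : 0 <= t ->
  INR (sm (fun y => if Rle_dec (Rabs (INR (g y) - m)) t then 0 else 1)%nat 0 Y) * (t * t)
  <= smR (fun y => (INR (g y) - m) ^ 2) 0 Y.
Proof.
  intros Ht. rewrite INR_sm. rewrite Rmult_comm, <- smR_scal.
  apply smR_le. intros y _. destruct (Rle_dec (Rabs (INR (g y) - m)) t) as [H|H].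
  - change (INR 0) with 0. rewrite Rmult_0_r. apply pow2_ge_0.
  - change (INR 1) with 1. apply Rnot_le_lt in H. rewrite Rmult_1_r.
    assert (Rabs (INR (g y) - m) * Rabs (INR (g y) - m) = (INR (g y) - m) ^ 2).
    { rewrite <- Rabs_mult. rewrite Rabs_right. ring. apply Rle_ge. apply Rle_0_sqr. }
    nra.
Qed.

Lemma sm_good_bad (good : nat -> bool) Y :
  (sm (fun y => if good y then 1 else 0)%nat 0 Y + sm (fun y => if good y then 0 else 1)%nat 0 Y = Y)%nat.
Proof. rewrite <- sm_add. rewrite (sm_ext _ (fun _ => 1%nat)). rewrite sm_const; lia.
  intros; destruct (good i); auto. Qed.
Lemma poly1 mu Rb : 0 < mu -> 1 <= mu * Rb -> 2 <= Rb ->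
  3 * (5/4) * (4*mu+1) * (6*mu+1)^2 <= 4 * mu * Rb * (36*mu+2) * (3*mu+1).
Proof.
  intros Hm H1 H2.
  assert (HX : 0 <= (36*mu+2)*(3*mu+1)) by nra.
  set (X := (36*mu+2)*(3*mu+1)) in *.
  replace (4 * mu * Rb * (36*mu+2) * (3*mu+1)) with (4 * (mu * Rb) * X) by (unfold X; ring).
  destruct (Rle_dec mu (1/2)).
  - apply Rle_trans with (4 * X).
    + unfold X; nra.
    + nra.
  - apply Rle_trans with (8 * mu * X).
    + assert (mu*mu >= mu/2) by nra. assert (mu*mu*mu >= mu*mu/2) by nra. unfold X; nra.
    + assert (0 <= mu * X) by nra. nra.
Qed.

Lemma sqrt_le_sq T X : 0 <= X -> T <= X * X -> sqrt T <= X.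
Proof. intros HX HT. destruct (Rle_dec T 0).
  - rewrite sqrt_neg_0 by auto. auto.
  - rewrite <- (sqrt_square X HX). apply sqrt_le_1_alt. auto. Qed.

Section Feas.
Variables (Rb Q mu r s w a c : R).
Hypotheses (HRb : 2 <= Rb) (HQ : 1 < Q) (Hr : 0 < r) (Hmu : mu = r * r) (Hs : 0 < s)
  (Hw : w * w = 2) (Hw0 : 0 < w)
  (B1 : 4 * (1 + 3 * mu + w * s * Q ^ 5) <= Q ^ 8 / Rb)
  (B3 : 4 * mu * (3 * mu + 1 + Q ^ 6 + 2 * s * / r * Q ^ 5) <= Q ^ 8 / Rb)
  (Hmub : 1 <= mu * Rb) (Ha : Q ^ 8 / Rb <= a) (Hc : c = a + Q ^ 6 - 1) (Hc2 : c + 1 <= Q ^ 8).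

Let t := sqrt (3 * (5/4) * c * (s * s) * (Q * Q) / (3 * mu + 1)).

Lemma feas_R4 : 4 <= Q * Q /\ 3 * mu + 1 <= 5/8 * (Q * Q).
Proof.
  assert (Hm : 0 < mu) by nra.
  assert (HQ6 : 0 < Q ^ 6) by (apply pow_lt; lra).
  assert (E8 : Q ^ 8 = Q ^ 6 * (Q * Q)) by ring.
  assert (H1 : 4 * mu * Q ^ 6 <= Q ^ 8 / Rb).
  { assert (0 <= 4 * mu * (3 * mu + 1 + 2 * s * / r * Q ^ 5)).
    { assert (0 < / r) by (apply Rinv_0_lt_compat; lra). assert (0 < Q^5) by (apply pow_lt; lra).
      assert (0 < s * / r * Q ^ 5) by (apply Rmult_lt_0_compat; [apply Rmult_lt_0_compat|]; lra). nra. }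
    nra. }
  assert (H2 : 4 * mu * Rb * Q ^ 6 <= Q ^ 8).
  { apply (Rmult_le_compat_r Rb) in H1; [|lra].
    assert (Q^8/Rb*Rb = Q^8) by (field; lra). nra. }
  assert (H4 : 4 <= Q * Q).
  { rewrite E8 in H2. assert (4 * Q ^ 6 <= Q ^ 6 * (Q * Q)) by nra. nra. }
  split; auto.
  assert (H5 : 4 * (mu * Rb) <= Q * Q) by (rewrite E8 in H2; nra).
  assert (mu <= Q * Q / 8) by nra. nra.
Qed.

Lemma sq_le x y : 0 <= y -> x * x <= y * y -> x <= y.
Proof. intros. nra. Qed.

Lemma t_nonneg : 0 <= t.
Proof. apply sqrt_pos. Qed.

Lemma c_pos : Q ^ 8 / Rb <= c.
Proof. assert (0 < Q^6) by (apply pow_lt; lra). assert (1 <= Q^6) by (apply pow_R1_Rle; lra). lra. Qed.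

Lemma P_pos : 0 < Q ^ 8 / Rb.
Proof. assert (0 < Q^8) by (apply pow_lt; lra). apply Rdiv_lt_0_compat; lra. Qed.

Lemma t_sq : t * t * (3 * mu + 1) = 3 * (5/4) * c * (s * s) * (Q * Q).
Proof.
  assert (Hm : 0 < mu) by nra. pose proof c_pos. pose proof P_pos.
  unfold t. rewrite sqrt_sqrt.
  - field. lra.
  - unfold Rdiv. apply Rmult_le_pos; [|left; apply Rinv_0_lt_compat; lra]. assert (0 <= s*s) by nra. assert (0 <= Q*Q) by nra.
    assert (0 <= c) by lra. repeat apply Rmult_le_pos; lra.
Qed.

Lemma feas_R3 : t * r <= 2 * s * Q ^ 5.
Proof.
  assert (Hm : 0 < mu) by nra. pose proof t_sq as T. pose proof t_nonneg.
  assert (0 < Q^5) by (apply pow_lt; lra).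
  apply sq_le. nra.
  assert (Hc0 : 0 <= c) by (pose proof c_pos; pose proof P_pos; lra).
  (* (t r)^2 (3mu+1) = 3.75 c s^2 Q^2 mu <= 3.75 Q^8 s^2 Q^2 mu <= 4 s^2 Q^10 (3mu+1) *)
  assert (E : t * r * (t * r) * (3 * mu + 1) = 3 * (5/4) * c * (s*s) * (Q*Q) * mu) by (rewrite <- T; rewrite Hmu; ring).
  assert (E2 : 3 * (5/4) * c * (s*s) * (Q*Q) * mu <= 2 * s * Q ^ 5 * (2 * s * Q ^ 5) * (3 * mu + 1)).
  { assert (0 <= (s*s)*(Q*Q)) by nra. assert (c <= Q^8) by lra.
    assert (3 * (5/4) * c * mu <= 4 * Q^8 * (3*mu+1)) by nra.
    replace (2 * s * Q ^ 5 * (2 * s * Q ^ 5) * (3 * mu + 1)) with (4 * Q^8 * (3*mu+1) * ((s*s)*(Q*Q))) by ring.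
    replace (3 * (5/4) * c * (s*s) * (Q*Q) * mu) with (3 * (5/4) * c * mu * ((s*s)*(Q*Q))) by ring.
    apply Rmult_le_compat_r; auto. }
  rewrite <- E in E2. apply Rmult_le_reg_r in E2; lra.
Qed.

Lemma feas_R1 : t + 3 * mu + 1 <= c / 4.
Proof.
  assert (Hm : 0 < mu) by nra. pose proof t_sq as T. pose proof t_nonneg as Tn.
  pose proof c_pos as Hcp. pose proof P_pos as Hp.
  set (P := Q ^ 8 / Rb) in *.
  assert (PR : P * Rb = Q ^ 8) by (unfold P; field; lra).
  assert (0 < Q^5) by (apply pow_lt; lra).
  assert (HtP : t * P <= c * (w * s * Q ^ 5)).
  { apply sq_le. assert (0 <= w * s * Q^5) by (repeat apply Rmult_le_pos; lra). nra.
    assert (E1 : t * P * (t * P) * (3 * mu + 1) = (3 * (5/4) * P) * P * (c * (s*s) * (Q*Q))) by (transitivity (P*P*(t*t*(3*mu+1))); [ring | rewrite T; ring]).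
    assert (E2 : c * (w * s * Q ^ 5) * (c * (w * s * Q ^ 5)) * (3 * mu + 1)
                = (2 * c * Rb * (3 * mu + 1)) * P * (c * (s*s) * (Q*Q))).
    { transitivity ((w*w) * c*c*(s*s)*(Q^8*(Q*Q))*(3*mu+1)); [ring|]. rewrite Hw, <- PR. ring. }
    assert (Hk : 0 <= c * (s*s) * (Q*Q)) by (assert (0<=s*s) by nra; assert (0 <= Q*Q) by nra; repeat apply Rmult_le_pos; lra).
    assert (H3 : 3 * (5/4) * P <= 2 * c * Rb * (3 * mu + 1)) by nra.
    assert (H4 : (3 * (5/4) * P) * P * (c * (s*s) * (Q*Q)) <= (2 * c * Rb * (3 * mu + 1)) * P * (c * (s*s) * (Q*Q))).
    { apply Rmult_le_compat_r; auto. apply Rmult_le_compat_r; lra. }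
    rewrite <- E1, <- E2 in H4. apply Rmult_le_reg_r in H4; lra. }
  assert (HB : w * s * Q ^ 5 <= P / 4 - 1 - 3 * mu) by lra.
  assert (H5 : (t + 3 * mu + 1) * P <= c / 4 * P).
  { assert (c * (w * s * Q ^ 5) <= c * (P / 4 - 1 - 3 * mu)) by (apply Rmult_le_compat_l; lra).
    assert ((3*mu+1) * P <= (3*mu+1) * c) by (apply Rmult_le_compat_l; lra). nra. }
  apply Rmult_le_reg_r in H5; lra.
Qed.

Lemma feas_R2 : 3 * mu * Q ^ 6 + (6 * mu + 1) * t + 9 * (mu * mu) + 3 * mu + 1 <= a.
Proof.
  assert (Hm : 0 < mu) by nra. pose proof t_sq as T. pose proof t_nonneg as Tn.
  pose proof c_pos as Hcp. pose proof P_pos as Hp.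
  set (P := Q ^ 8 / Rb) in *.
  assert (PR : P * Rb = Q ^ 8) by (unfold P; field; lra).
  assert (0 < Q^5) by (apply pow_lt; lra).
  assert (0 < Q^6) by (apply pow_lt; lra).
  assert (Hsr : 0 < s * / r * Q ^ 5) by (apply Rmult_lt_0_compat; [apply Rmult_lt_0_compat; [|apply Rinv_0_lt_compat]|]; lra).
  assert (B3' : 4 * mu * (3 * mu + 1 + Q ^ 6) + 8 * r * s * Q ^ 5 <= P).
  { replace (8 * r * s * Q ^ 5) with (4 * mu * (2 * s * / r * Q ^ 5)) by (rewrite Hmu; field; lra). lra. }
  assert (HQ6 : 4 * mu * Q ^ 6 <= a) by nra.
  assert (Hca : 4 * mu * c <= (4 * mu + 1) * a) by nra.
  assert (HtP : (6 * mu + 1) * t * P <= a * ((6 * r + w) * s * Q ^ 5)).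
  { apply sq_le. assert (0 <= (6 * r + w) * s * Q^5) by (repeat apply Rmult_le_pos; lra). nra.
    set (K := (s*s) * (Q*Q)).
    assert (HK : 0 < K) by (unfold K; apply Rmult_lt_0_compat; nra).
    assert (E1 : (6 * mu + 1) * t * P * ((6 * mu + 1) * t * P) * (3 * mu + 1) * (4 * mu)
               = (3 * (5/4) * (6*mu+1)*(6*mu+1) * (4 * mu * c) * P) * P * K) by (unfold K; transitivity ((6*mu+1)*(6*mu+1)*P*P*(4*mu)*(t*t*(3*mu+1))); [ring | rewrite T; ring]).
    assert (E2 : a * ((6 * r + w) * s * Q ^ 5) * (a * ((6 * r + w) * s * Q ^ 5)) * (3 * mu + 1) * (4 * mu)
               = (a * a * ((6*r+w)*(6*r+w)) * (3*mu+1) * 4 * mu * Rb) * P * K).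
    { unfold K. transitivity (a * a * ((6*r+w)*(6*r+w)) * (s*s) * (Q^8*(Q*Q)) * (3*mu+1) * (4*mu)); [ring|].
      rewrite <- PR. ring. }
    assert (Hpoly := poly1 mu Rb Hm Hmub HRb).
    assert (Hsq : 36 * mu + 2 <= (6*r+w)*(6*r+w)) by (rewrite Hmu; nra).
    assert (H3 : 3 * (5/4) * (6*mu+1)*(6*mu+1) * (4 * mu * c) * P <= a * a * ((6*r+w)*(6*r+w)) * (3*mu+1) * 4 * mu * Rb).
    { assert (Hx : 0 <= 3 * (5/4) * (6*mu+1)*(6*mu+1)) by nra.
      apply Rle_trans with (3 * (5/4) * (6*mu+1)*(6*mu+1) * ((4 * mu + 1) * a) * a).
      { apply Rmult_le_compat; try lra.
        - apply Rmult_le_pos; [lra|]. assert (0 <= c) by lra. nra.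
        - apply Rmult_le_compat_l; lra. }
      apply Rle_trans with (a * a * ((36*mu+2) * (3*mu+1) * 4 * mu * Rb)).
      { assert (0 <= a * a) by nra. nra. }
      assert (0 <= a * a) by nra. assert (0 <= (3*mu+1) * 4 * mu * Rb) by nra.
      replace (a * a * ((36*mu+2) * (3*mu+1) * 4 * mu * Rb)) with ((a * a) * ((3*mu+1) * 4 * mu * Rb) * (36*mu+2)) by ring.
      replace (a * a * ((6*r+w)*(6*r+w)) * (3*mu+1) * 4 * mu * Rb) with ((a * a) * ((3*mu+1) * 4 * mu * Rb) * ((6*r+w)*(6*r+w))) by ring.
      apply Rmult_le_compat_l; [apply Rmult_le_pos|]; lra. }
    assert (H4 : (3 * (5/4) * (6*mu+1)*(6*mu+1) * (4 * mu * c) * P) * P * K <= (a * a * ((6*r+w)*(6*r+w)) * (3*mu+1) * 4 * mu * Rb) * P * K).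
    { apply Rmult_le_compat_r; [lra|]. apply Rmult_le_compat_r; lra. }
    rewrite <- E1, <- E2 in H4. apply Rmult_le_reg_r in H4; [|nra]. apply Rmult_le_reg_r in H4; lra. }
  assert (H5 : (3 * mu * Q ^ 6 + (6 * mu + 1) * t + 9 * (mu * mu) + 3 * mu + 1) * P <= a * P).
  { assert (3 * mu * Q ^ 6 * P <= 3 * mu * Q ^ 6 * a) by (apply Rmult_le_compat_l; nra).
    assert ((9 * (mu * mu) + 3 * mu + 1) * P <= (9 * (mu * mu) + 6 * mu + 1) * a) by nra.
    assert (a * (3 * mu * Q ^ 6 + (6 * r + w) * s * Q ^ 5 + 9 * (mu*mu) + 6 * mu + 1) <= a * P).
    { apply Rmult_le_compat_l; [lra|]. nra. }
    nra. }
  apply Rmult_le_reg_r in H5; lra.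
Qed.
End Feas.

Lemma smR_nonneg f s n : (forall i, 0 <= f i) -> 0 <= smR f s n.
Proof. intros H. revert s; induction n; intros s; simpl. lra. specialize (H s). specialize (IHn (S s)). lra. Qed.

Lemma mu_b b h (Hb : (2 <= b)%nat) (H1 : h 1%nat = 1%nat) : 1 <= digit_mean b h * INR b.
Proof.
  unfold digit_mean. rewrite fold_smR.
  assert (INR b <> 0) by (apply not_0_INR; lia).
  replace (/ INR b * smR (fun j => INR (h j)) 0 b * INR b) with (smR (fun j => INR (h j)) 0 b) by (field; auto).
  replace b with (2 + (b - 2))%nat by lia. rewrite smR_split. simpl. rewrite H1.
  pose proof (smR_nonneg (fun j => INR (h j)) 2 (b - 2) (fun i => pos_INR _)).
  pose proof (pos_INR (h 0%nat)). simpl in *. lra.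
Qed.

Lemma var_pos b h (Hb : (2 <= b)%nat) (H0 : h 0%nat = 0%nat) (H1 : h 1%nat = 1%nat) : 0 < digit_variance b h.
Proof.
  unfold digit_variance. rewrite fold_smR.
  set (mu := digit_mean b h).
  assert (0 < / INR b) by (apply Rinv_0_lt_compat, lt_0_INR; lia).
  apply Rmult_lt_0_compat; auto.
  replace b with (2 + (b - 2))%nat by lia. rewrite smR_split. simpl. rewrite H0, H1.
  pose proof (smR_nonneg (fun j => (INR (h j) - mu)^2) 2 (b - 2) (fun i => pow2_ge_0 _)).
  simpl in *. nra.
Qed.

Lemma ceil_ex x : 0 <= x -> exists k : nat, INR k - 1 <= x < INR k.
Proof.
  intros Hx. destruct (archimed x) as [H1 H2].
  assert (0 <= up x)%Z by (apply le_IZR; simpl; lra).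
  exists (Z.to_nat (up x)). rewrite INR_IZR_INZ, Z2Nat.id by auto. lra.
Qed.

Lemma floor_ex x : 0 <= x -> exists k : nat, INR k <= x < INR k + 1.
Proof.
  intros Hx. destruct (ceil_ex x Hx) as [k Hk].
  destruct k. simpl in Hk. lra.
  destruct (Rle_dec (INR (S k)) x).
  - exists (S k). lra.
  - exists k. rewrite S_INR in *. lra.
Qed.

Lemma RpQ Rb y j : 0 < Rb -> Rpower Rb (INR j * y) = Rpower Rb y ^ j.
Proof. intros H. rewrite <- Rpower_pow by (unfold Rpower; apply exp_pos).
  rewrite Rpower_mult. f_equal. ring. Qed.

Lemma pow2_sq n : (n * n <= 4 * 2 ^ n)%nat.
Proof.
  induction n. simpl; lia.
  destruct (le_lt_dec n 2). { destruct n as [|[|[|]]]; simpl; lia. }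
  rewrite Nat.pow_succ_r'. nia.
Qed.

Definition Bcond b h n : Prop :=
  4 * (1 + 3 * digit_mean b h + sqrt 2 * digit_sd b h * Rpower (INR b) (5 * INR n / 8)) <= INR b ^ (n - 1) /\
  4 * digit_mean b h * (3 * digit_mean b h + 1 + Rpower (INR b) (3 * INR n / 4)
     + 2 * digit_sd b h * / sqrt (digit_mean b h) * Rpower (INR b) (5 * INR n / 8)) <= INR b ^ (n - 1).

Definition loss b h n : R :=
  2 / Rpower (INR b) (INR n / 4) + 4 * digit_sd b h / (sqrt (digit_mean b h) * Rpower (INR b) (INR n / 8)).

Lemma Q_facts b n : (2 <= b)%nat -> (1 <= n)%nat ->
  let Q := Rpower (INR b) (INR n / 8) in
  1 < Q /\ Rpower (INR b) (5 * INR n / 8) = Q ^ 5 /\ Rpower (INR b) (3 * INR n / 4) = Q ^ 6 /\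
  Rpower (INR b) (INR n / 4) = Q ^ 2 /\ INR b ^ (n - 1) = Q ^ 8 / INR b /\ INR b ^ n = Q ^ 8.
Proof.
  intros Hb Hn Q.
  assert (HRb : 2 <= INR b) by (replace 2 with (INR 2) by (simpl; lra); apply le_INR; auto).
  assert (Rb0 : 0 < INR b) by lra.
  assert (En : INR b ^ n = Q ^ 8).
  { unfold Q. rewrite <- RpQ by auto. rewrite <- Rpower_pow by auto. f_equal. simpl. field. }
  repeat split.
  - unfold Q. rewrite <- (Rpower_O (INR b)) at 1 by auto. apply Rpower_lt. lra.
    apply Rdiv_lt_0_compat; [|lra]. apply lt_0_INR; lia.
  - unfold Q. rewrite <- RpQ by auto. f_equal. simpl. field.
  - unfold Q. rewrite <- RpQ by auto. f_equal. simpl. field.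
  - unfold Q. rewrite <- RpQ by auto. f_equal. simpl. field.
  - rewrite <- En. replace n with (S (n - 1)) at 2 by lia. simpl. field. lra.
  - auto.
Qed.

Lemma exp_1mx x : 0 <= x <= 1/4 -> exp (- (4/3 * x)) <= 1 - x.
Proof.
  intros Hx. pose proof (exp_ineq1_le (4/3 * x)) as H.
  pose proof (exp_pos (4/3*x)).
  assert (E : exp (- (4/3 * x)) * exp (4/3*x) = 1) by (rewrite <- exp_plus; replace (- (4/3*x) + 4/3*x) with 0 by ring; apply exp_0).
  assert (exp (- (4/3 * x)) * (1 + 4/3*x) <= 1) by (rewrite <- E; apply Rmult_le_compat_l; [left; apply exp_pos|lra]).
  assert (1 <= (1 - x) * (1 + 4/3*x)) by nra.
  pose proof (exp_pos (- (4/3 * x))). nra.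
Qed.

Lemma exp_inv1 e : 0 <= e -> exp (- e) * (1 + e) <= 1.
Proof.
  intros He. pose proof (exp_ineq1_le e).
  assert (E : exp (- e) * exp e = 1) by (rewrite <- exp_plus; replace (- e + e) with 0 by ring; apply exp_0).
  rewrite <- E. apply Rmult_le_compat_l; [left; apply exp_pos|lra].
Qed.

Lemma step b h C n a c : (2 <= b)%nat -> h 0%nat = 0%nat -> h 1%nat = 1%nat -> (1 <= n)%nat ->
  Bcond b h n -> strict_interval b n a c ->
  exists n' a' c', (2 * n <= n')%nat /\ strict_interval b n' a' c' /\
    typeC_density b h C a' c' >= typeC_density b h C a c * exp (- loss b h n).
Proof.
  intros Hb H0 H1 Hn [B1 B3] [Sa [Sc SL]].
  destruct (Q_facts b n Hb Hn) as [HQ [E5 [E6 [E2 [En1 En]]]]].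
  set (Q := Rpower (INR b) (INR n / 8)) in *.
  set (Rb := INR b) in *.
  assert (HRb : 2 <= Rb) by (unfold Rb; replace 2 with (INR 2) by (simpl; lra); apply le_INR; auto).
  set (mu := digit_mean b h) in *.
  set (v := digit_variance b h) in *.
  assert (Hmub : 1 <= mu * Rb) by (apply mu_b; auto).
  assert (Hv : 0 < v) by (apply var_pos; auto).
  assert (Hmu0 : 0 < mu) by nra.
  set (r := sqrt mu). set (s := digit_sd b h).
  assert (Hr : 0 < r) by (apply sqrt_lt_R0; auto).
  assert (Hmur : mu = r * r) by (unfold r; rewrite sqrt_sqrt; lra).
  assert (Hs : 0 < s) by (apply sqrt_lt_R0; auto).
  assert (Hvs : v = s * s) by (unfold s, digit_sd; rewrite sqrt_sqrt; fold v; lra).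
  set (w := sqrt 2).
  assert (Hw : w * w = 2) by (apply sqrt_sqrt; lra).
  assert (Hw0 : 0 < w) by (apply sqrt_lt_R0; lra).
  rewrite E5, En1 in B1. rewrite E6, E5, En1 in B3. fold r in B3. fold s in B1, B3. fold w in B1.
  unfold icard in SL. rewrite E6 in SL.
  assert (HQ6 : 0 < Q ^ 6) by (apply pow_lt; lra).
  assert (Hac : (a <= c)%nat).
  { destruct (le_lt_dec a c); auto. replace (S c - a)%nat with 0%nat in SL by lia. simpl in SL. lra. }
  assert (HcR : INR c = INR a + Q ^ 6 - 1).
  { rewrite minus_INR in SL by lia. rewrite S_INR in SL. lra. }
  assert (Hb1 : (1 <= b ^ n)%nat) by (assert (b ^ n <> 0)%nat by (apply Nat.pow_nonzero; lia); lia).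
  assert (Hc2 : INR c + 1 <= Q ^ 8).
  { rewrite <- En. unfold Rb. rewrite <- pow_INR. rewrite <- S_INR. apply le_INR. lia. }
  assert (HaR : Q ^ 8 / Rb <= INR a).
  { rewrite <- En1. unfold Rb. rewrite <- pow_INR. apply le_INR. auto. }
  set (t := sqrt (3 * (5 / 4) * INR c * (s * s) * (Q * Q) / (3 * mu + 1))).
  assert (R1 : t + 3 * mu + 1 <= INR c / 4) by (eapply (feas_R1 Rb Q mu r s w (INR a) (INR c)); eauto).
  assert (R2 : 3 * mu * Q ^ 6 + (6 * mu + 1) * t + 9 * (mu * mu) + 3 * mu + 1 <= INR a)
    by (eapply (feas_R2 Rb Q mu r s w (INR a) (INR c)); eauto).
  assert (R3 : t * r <= 2 * s * Q ^ 5) by (eapply (feas_R3 Rb Q mu r s (INR a) (INR c)); eauto).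
  assert (R4 : 4 <= Q * Q /\ 3 * mu + 1 <= 5/8 * (Q * Q)) by (eapply (feas_R4 Rb Q mu r s); eauto).
  destruct R4 as [R4a R4b].
  assert (Tsq : t * t * (3 * mu + 1) = 3 * (5/4) * INR c * (s * s) * (Q * Q)) by (eapply (t_sq Rb Q mu r s (INR a) (INR c)); eauto).
  assert (Ht0 : 0 <= t) by apply sqrt_pos.
  assert (Hmu1 : 0 < 3 * mu + 1) by lra.
  assert (Hc0 : 0 <= INR c) by apply pos_INR.
  destruct (ceil_ex ((INR c + t) / (3 * mu + 1))) as [k [Hk1 Hk2]].
  { unfold Rdiv. apply Rmult_le_pos; [lra|left; apply Rinv_0_lt_compat; lra]. }
  assert (Kup : (3 * mu + 1) * INR k <= INR c + t + 3 * mu + 1).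
  { apply (Rmult_le_compat_l (3*mu+1)) in Hk1; [|lra]. unfold Rdiv in Hk1.
    replace ((3 * mu + 1) * ((INR c + t) * / (3 * mu + 1))) with (INR c + t) in Hk1 by (field; lra). lra. }
  assert (Klo : INR c + t <= (3 * mu + 1) * INR k).
  { apply (Rmult_lt_compat_l (3*mu+1)) in Hk2; [|lra]. unfold Rdiv in Hk2.
    replace ((3 * mu + 1) * ((INR c + t) * / (3 * mu + 1))) with (INR c + t) in Hk2 by (field; lra). lra. }
  clear Hk1 Hk2.
  assert (Kfeas : 3 * mu * INR k + t + 1 <= INR a).
  { assert (Hx : (3 * mu + 1) * (3 * mu * INR k + t + 1) <= (3 * mu + 1) * INR a).
    { assert (3 * mu * ((3 * mu + 1) * INR k) <= 3 * mu * (INR c + t + 3 * mu + 1)) by (apply Rmult_le_compat_l; lra).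
      rewrite HcR in *. nra. }
    apply Rmult_le_reg_l in Hx; lra. }
  assert (Kpos : (1 <= k)%nat).
  { destruct k. simpl in Klo. assert (0 < INR a) by (pose proof P_pos; apply Rlt_le_trans with (Q^8/Rb); [apply Rdiv_lt_0_compat; [apply pow_lt|]|]; lra). lra. lia. }
  destruct (floor_ex (3 * mu * INR k + t)) as [M [HM1 HM2]].
  { assert (0 <= INR k) by apply pos_INR. nra. }
  assert (HMa : (M < a)%nat) by (apply INR_lt; lra).
  assert (HkM : (a <= k + M)%nat).
  { assert (INR a <= INR c) by (apply le_INR; auto).
    assert (INR a - 1 < INR k + INR M) by nra.
    destruct (le_lt_dec a (k + M)) as [l|l]; auto. exfalso.
    assert (HH : INR (S (k + M)) <= INR a) by (apply le_INR; lia). rewrite S_INR, plus_INR in HH. lra. }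
  set (G := happyH b h).
  set (Y := (b ^ (3 * k))%nat).
  set (m := INR (3 * k) * mu).
  assert (Hm : m = 3 * mu * INR k) by (unfold m; rewrite mult_INR; simpl; ring).
  set (good := fun y => if Rle_dec (Rabs (INR (G y) - m)) t then true else false).
  set (slo := (a - M)%nat).
  destruct (shift_avg (typeC b h C) G good Y a c slo k) as [s0 [Hs0 Hcnt]].
  { unfold slo; lia. }
  { lia. }
  { intros y _ Hg. unfold good in Hg. destruct (Rle_dec (Rabs (INR (G y) - m)) t) as [Hy|]; [|discriminate].
    assert (Hy2 : - t <= INR (G y) - m <= t) by (unfold Rabs in Hy; destruct (Rcase_abs (INR (G y) - m)); lra). split.
    - assert (HGM : (G y <= M)%nat).
      { destruct (le_lt_dec (G y) M) as [l|l]; auto. exfalso.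
        assert (HH : INR (S M) <= INR (G y)) by (apply le_INR; lia). rewrite S_INR in HH. lra. }
      unfold slo. lia.
    - apply INR_le. rewrite plus_INR. lra. }
  set (ng := sm (fun y => if good y then 1 else 0)%nat 0 Y) in *.
  set (nb := sm (fun y => if good y then 0 else 1)%nat 0 Y).
  assert (Hgb : (ng + nb = Y)%nat) by apply sm_good_bad.
  assert (HYR : INR Y = Rb ^ (3 * k)) by (unfold Y, Rb; apply pow_INR).
  assert (Hcheb : INR nb * (t * t) <= 3 * INR k * (s * s) * INR Y).
  { pose proof (cheb G m t Y Ht0) as Hc.
    rewrite (sm_ext _ (fun y => if good y then 0 else 1)%nat) in Hc.
    2:{ intros y _. unfold good. destruct (Rle_dec (Rabs (INR (G y) - m)) t); auto. }
    fold nb in Hc. unfold m, G in Hc. unfold Y in Hc.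
    pose proof (S2_formula b h Hb H0 (3 * k)) as S2. fold mu v Rb in S2. rewrite S2 in Hc. rewrite HYR.
    rewrite mult_INR in Hc. simpl INR in Hc at 1. rewrite Hvs in Hc.
    replace (INR 3) with 3 in Hc by (simpl; ring). lra. }
  assert (Ht2 : 3 * INR k * (s * s) * (Q * Q) <= t * t).
  { assert (Hx : 3 * INR k * (s * s) * (Q * Q) * (3 * mu + 1) <= t * t * (3 * mu + 1)).
    { rewrite Tsq. assert (0 <= (s*s)*(Q*Q)) by nra.
      assert ((3 * mu + 1) * INR k <= 5/4 * INR c) by lra.
      replace (3 * INR k * (s * s) * (Q * Q) * (3 * mu + 1)) with (3 * ((3 * mu + 1) * INR k) * ((s*s)*(Q*Q))) by ring.
      replace (3 * (5 / 4) * INR c * (s * s) * (Q * Q)) with (3 * (5/4 * INR c) * ((s*s)*(Q*Q))) by ring.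
      apply Rmult_le_compat_r; lra. }
    apply Rmult_le_reg_r in Hx; lra. }
  assert (Hnb : INR nb * (Q * Q) <= INR Y).
  { assert (HkR : 1 <= INR k) by (replace 1 with (INR 1) by reflexivity; apply le_INR; auto).
    assert (Hx : INR nb * (Q * Q) * (3 * INR k * (s * s)) <= INR Y * (3 * INR k * (s * s))).
    { assert (0 <= INR nb) by apply pos_INR.
      assert (INR nb * (3 * INR k * (s * s) * (Q * Q)) <= INR nb * (t * t)) by (apply Rmult_le_compat_l; auto).
      nra. }
    apply Rmult_le_reg_r in Hx; auto. assert (0 < s * s) by nra. nra. }
  assert (Hs1 : (1 <= s0)%nat) by (unfold slo in Hs0; lia).
  set (Ps := (rep b s0 * b ^ (k - s0))%nat).
  assert (HYpos : (1 <= Y)%nat) by (unfold Y; assert (b ^ (3 * k) <> 0)%nat by (apply Nat.pow_nonzero; lia); lia).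
  assert (HPs : G Ps = s0).
  { unfold Ps, G. rewrite <- (Nat.add_0_r (rep b s0 * b ^ (k - s0))).
    rewrite H_concat by (auto; assert (b ^ (k - s0) <> 0)%nat by (apply Nat.pow_nonzero; lia); lia).
    rewrite H_rep by auto. replace (happyH b h 0) with 0%nat by reflexivity; lia. }
  assert (HPb : (b ^ (k - 1) <= Ps < b ^ k)%nat).
  { destruct (rep_bounds b Hb s0 Hs1) as [r1 r2]. unfold Ps.
    replace (b ^ (k - 1))%nat with (b ^ (s0 - 1) * b ^ (k - s0))%nat by (rewrite <- Nat.pow_add_r; f_equal; lia).
    replace (b ^ k)%nat with (b ^ s0 * b ^ (k - s0))%nat by (rewrite <- Nat.pow_add_r; f_equal; lia).
    assert (b ^ (k - s0) <> 0)%nat by (apply Nat.pow_nonzero; lia). split; nia. }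
  set (a' := (Ps * Y)%nat). set (c' := (a' + Y - 1)%nat).
  assert (Hic : icard a' c' = Y) by (unfold icard, c'; lia).
  assert (Hstrict : strict_interval b (4 * k) a' c').
  { split; [|split].
    - unfold a', Y. replace (4 * k - 1)%nat with ((k - 1) + 3 * k)%nat by lia. rewrite Nat.pow_add_r. nia.
    - unfold c', a', Y. replace (4 * k)%nat with (k + 3 * k)%nat by lia. rewrite Nat.pow_add_r. nia.
    - rewrite Hic, HYR. rewrite <- Rpower_pow by lra. f_equal. rewrite !mult_INR. simpl. field. }
  set (cnt := sm (fun y => indicator (typeC b h C (s0 + G y))) 0 Y) in *.
  assert (Hcnt' : (cnt <= typeC_count b h C a' c')%nat).
  { unfold typeC_count. rewrite fold_sm, Hic. rewrite <- (Nat.add_0_l a'). rewrite sm_shift.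
    apply sm_le. intros y Hy. apply ind_mono. intros HT. apply typeC_H.
    replace (y + a')%nat with (Ps * b ^ (3 * k) + y)%nat by (unfold a', Y; lia).
    fold G. unfold G at 1. rewrite H_concat by (auto; lia). fold G. rewrite HPs. auto. }
  exists (4 * k)%nat, a', c'. split; [|split; auto].
  {
    assert (Ha1 : 1 <= INR a).
    { replace 1 with (INR 1) by reflexivity. apply le_INR. assert (b ^ (n - 1) <> 0)%nat by (apply Nat.pow_nonzero; lia). lia. }
    assert (Hq8 : INR n * INR n <= 4 * Q ^ 8).
    { rewrite <- En. pose proof (pow2_sq n) as Hp. apply le_INR in Hp. rewrite !mult_INR, pow_INR in Hp. simpl in Hp.
      assert (2 ^ n <= Rb ^ n) by (apply pow_incr; lra). replace (1+1) with 2 in Hp by ring.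
      replace (1 + 1 + 1 + 1) with 4 in Hp by ring. lra. }
    assert (Hq4 : INR n / 2 <= Q ^ 4).
    { apply sq_le. apply pow_le; lra. replace (Q ^ 4 * Q ^ 4) with (Q ^ 8) by ring. lra. }
    assert (HkQ : Q ^ 6 <= 5/8 * (Q * Q) * INR k).
    { assert (0 <= INR k) by apply pos_INR. assert ((3 * mu + 1) * INR k <= 5/8 * (Q*Q) * INR k) by (apply Rmult_le_compat_r; lra). lra. }
    assert (Hk4 : Q ^ 4 <= INR k).
    { assert (Hx : Q ^ 4 * (Q * Q) <= INR k * (Q * Q)) by (replace (Q ^ 4 * (Q * Q)) with (Q ^ 6) by ring; lra).
      apply Rmult_le_reg_r in Hx; nra. }
    assert (INR n <= INR (2 * k)) by (rewrite mult_INR; simpl; lra).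
    apply INR_le in H. lia. }
  unfold typeC_density. rewrite Hic. unfold icard. rewrite SL.
  unfold loss. fold Rb mu s. fold r. rewrite E2. fold Q.
  set (T := typeC_count b h C a c).
  assert (HT : T = sm (fun z => indicator (typeC b h C z)) a (S c - a)) by (unfold T, typeC_count; rewrite fold_sm; reflexivity).
  rewrite <- HT in Hcnt.
  set (NS := (S k - slo)%nat) in *.
  assert (HNS : INR NS <= Q ^ 6 + 2 * t + 3 * mu + 1).
  { unfold NS, slo. rewrite minus_INR by lia. rewrite S_INR, minus_INR by lia. rewrite HcR in Kup. nra. }
  assert (HNS0 : (1 <= NS)%nat) by (unfold NS; lia).
  assert (HNS0R : 1 <= INR NS) by (replace 1 with (INR 1) by reflexivity; apply le_INR; auto).
  apply Rle_ge.
  set (x := 1 / (Q * Q)).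
  set (e := (2 * t + 3 * mu + 1) / Q ^ 6).
  assert (HQ2 : 0 < Q * Q) by nra.
  assert (Hx0 : 0 <= x <= 1/4).
  { unfold x. split. apply Rlt_le, Rdiv_lt_0_compat; lra.
    apply (Rmult_le_reg_r (Q*Q)); auto. unfold Rdiv. rewrite Rmult_assoc, Rinv_l by lra. lra. }
  assert (He0 : 0 <= e) by (unfold e; apply Rlt_le, Rdiv_lt_0_compat; lra).
  assert (Hloss : 4/3 * x + e <= 2 / Q ^ 2 + 4 * s / (r * Q)).
  { unfold x, e.
    assert (Hq : 0 < Q) by lra.
    assert (A1 : (3 * mu + 1) / Q ^ 6 <= 2/3 * (1 / (Q * Q))).
    { assert (Eq : 2/3 * (1 / (Q * Q)) - (3 * mu + 1) / Q ^ 6 = (2/3 * (Q * Q) * (Q * Q) - (3 * mu + 1)) / Q ^ 6) by (field; lra).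
      assert (0 <= (2/3 * (Q * Q) * (Q * Q) - (3 * mu + 1)) / Q ^ 6).
      { unfold Rdiv. apply Rmult_le_pos; [nra | left; apply Rinv_0_lt_compat; auto]. }
      lra. }
    assert (A2 : 2 * t / Q ^ 6 <= 4 * s / (r * Q)).
    { apply (Rmult_le_reg_r (Q ^ 6 * r)). apply Rmult_lt_0_compat; auto.
      replace (2 * t / Q ^ 6 * (Q ^ 6 * r)) with (2 * (t * r)) by (field; lra).
      replace (4 * s / (r * Q) * (Q ^ 6 * r)) with (2 * (2 * s * Q ^ 5)) by (field; lra). lra. }
    assert (A3 : (2 * t + 3 * mu + 1) / Q ^ 6 = 2 * t / Q ^ 6 + (3 * mu + 1) / Q ^ 6) by (field; lra).
    rewrite A3. replace (2 / Q ^ 2) with (2 * (1 / (Q * Q))) by (field; lra). lra. }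
  assert (HE : exp (- (2 / Q ^ 2 + 4 * s / (r * Q))) * (1 + e) <= 1 - x).
  { apply Rle_trans with (exp (- (4/3 * x)) * (exp (- e) * (1 + e))).
    - rewrite <- Rmult_assoc, <- exp_plus. apply Rmult_le_compat_r; [lra|].
      destruct (Req_dec (- (2 / Q ^ 2 + 4 * s / (r * Q))) (- (4 / 3 * x) + - e)) as [Heq|Hne].
      + rewrite Heq; lra.
      + left. apply exp_increasing. lra.
    - pose proof (exp_1mx x Hx0). pose proof (exp_inv1 e He0) as HH. pose proof (exp_pos (- (4/3*x))).
      apply Rle_trans with (exp (- (4 / 3 * x)) * 1). apply Rmult_le_compat_l; [lra|]. exact HH. lra. }
  set (E := exp (- (2 / Q ^ 2 + 4 * s / (r * Q)))) in *.
  assert (HE0 : 0 < E) by apply exp_pos.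
  assert (HYp : 0 < INR Y) by (apply lt_0_INR; lia).
  assert (Hng : INR Y * (1 - x) <= INR ng).
  { assert (INR ng + INR nb = INR Y) by (rewrite <- plus_INR; f_equal; auto).
    assert (INR nb <= INR Y * x).
    { unfold x. apply (Rmult_le_reg_r (Q*Q)); auto. unfold Rdiv. rewrite Rmult_1_l, Rmult_assoc, Rinv_l by lra. lra. }
    lra. }
  assert (HNSe : INR NS <= Q ^ 6 * (1 + e)) by (unfold e; field_simplify; [lra|lra]).
  assert (Hmain : INR T * E * INR NS * INR Y <= INR cnt * Q ^ 6 * INR NS).
  { apply le_INR in Hcnt. rewrite !mult_INR in Hcnt.
    assert (HT0 : 0 <= INR T) by apply pos_INR.
    assert (E * INR NS <= E * (Q ^ 6 * (1 + e))) by (apply Rmult_le_compat_l; lra).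
    assert (E * (Q ^ 6 * (1 + e)) * INR Y <= Q ^ 6 * INR ng).
    { replace (E * (Q ^ 6 * (1 + e)) * INR Y) with ((E * (1 + e)) * (Q ^ 6 * INR Y)) by ring.
      apply Rle_trans with ((1 - x) * (Q ^ 6 * INR Y)). apply Rmult_le_compat_r; [nra|lra]. nra. }
    apply Rle_trans with (INR T * (Q ^ 6 * INR ng)).
    - replace (INR T * E * INR NS * INR Y) with (INR T * (E * INR NS * INR Y)) by ring.
      apply Rmult_le_compat_l; auto. apply Rle_trans with (E * (Q ^ 6 * (1 + e)) * INR Y); auto.
      apply Rmult_le_compat_r; lra.
    - nra. }
  assert (Hm2 : INR T * E * INR Y <= INR cnt * Q ^ 6).
  { apply (Rmult_le_reg_r (INR NS)); [lra|]. lra. }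
  apply le_INR in Hcnt'.
  unfold Rdiv. apply Rle_trans with (INR cnt * / INR Y).
  - apply (Rmult_le_reg_r (INR Y * Q ^ 6)). nra.
    replace (INR T * / Q ^ 6 * E * (INR Y * Q ^ 6)) with (INR T * E * INR Y) by (field; lra).
    replace (INR cnt * / INR Y * (INR Y * Q ^ 6)) with (INR cnt * Q ^ 6) by (field; lra). lra.
  - apply Rmult_le_compat_r; [left; apply Rinv_0_lt_compat; lra | auto].
Qed.

Lemma Bmono b h n n' : (2 <= b)%nat -> h 0%nat = 0%nat -> h 1%nat = 1%nat -> (1 <= n)%nat -> (n <= n')%nat ->
  Bcond b h n -> Bcond b h n'.
Proof.
  intros Hb H0 H1 Hn Hnn [B1 B3].
  destruct (Q_facts b n Hb Hn) as [HQ [E5 [E6 [E2 [En1 En]]]]].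
  destruct (Q_facts b n' Hb ltac:(lia)) as [HQ' [E5' [E6' [E2' [En1' En']]]]].
  set (Q := Rpower (INR b) (INR n / 8)) in *.
  set (Q' := Rpower (INR b) (INR n' / 8)) in *.
  set (Rb := INR b) in *.
  assert (HRb : 2 <= Rb) by (unfold Rb; replace 2 with (INR 2) by (simpl; lra); apply le_INR; auto).
  set (D := Rpower Rb ((INR n' - INR n) / 8)).
  assert (HD : 1 <= D).
  { unfold D. rewrite <- (Rpower_O Rb) by lra. apply Rle_Rpower; [lra|].
    apply le_INR in Hnn. lra. }
  assert (HQQ : Q' = Q * D).
  { unfold Q', Q, D. rewrite <- Rpower_plus. f_equal. field. }
  unfold Bcond. fold Rb. rewrite E5', E6', En1', HQQ. rewrite E5, E6, En1 in *.
  set (mu := digit_mean b h) in *. set (s := digit_sd b h) in *.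
  assert (Hmub : 1 <= mu * Rb) by (apply mu_b; auto).
  assert (Hmu0 : 0 < mu) by nra.
  assert (Hs : 0 <= s) by apply sqrt_pos.
  assert (Hr : 0 < sqrt mu) by (apply sqrt_lt_R0; auto).
  assert (Hw : 0 <= sqrt 2) by apply sqrt_pos.
  assert (HQ0 : 0 < Q) by lra.
  assert (D5 : D ^ 5 <= D ^ 8) by (replace (D^8) with (D^5 * D^3) by ring; assert (1 <= D^3) by (apply pow_R1_Rle; lra); assert (0 < D^5) by (apply pow_lt; lra); nra).
  assert (D6 : D ^ 6 <= D ^ 8) by (replace (D^8) with (D^6 * D^2) by ring; assert (1 <= D^2) by (apply pow_R1_Rle; lra); assert (0 < D^6) by (apply pow_lt; lra); nra).
  assert (D0 : 1 <= D ^ 8) by (apply pow_R1_Rle; lra).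
  assert (Hdiv : (Q * D) ^ 8 / Rb = Q ^ 8 / Rb * D ^ 8) by (field; lra).
  rewrite Hdiv.
  assert (X5 : 0 <= Q ^ 5) by (apply pow_le; lra).
  assert (X6 : 0 <= Q ^ 6) by (apply pow_le; lra).
  split.
  - assert (0 <= sqrt 2 * s * Q ^ 5) by (apply Rmult_le_pos; [apply Rmult_le_pos|]; auto).
    replace (sqrt 2 * s * (Q * D) ^ 5) with (sqrt 2 * s * Q ^ 5 * D ^ 5) by ring.
    assert (sqrt 2 * s * Q ^ 5 * D ^ 5 <= sqrt 2 * s * Q ^ 5 * D ^ 8) by (apply Rmult_le_compat_l; auto).
    assert (4 * (1 + 3 * mu + sqrt 2 * s * Q ^ 5) * 1 <= 4 * (1 + 3 * mu + sqrt 2 * s * Q ^ 5) * D ^ 8) by (apply Rmult_le_compat_l; nra).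
    nra.
  - assert (Y : 0 <= 2 * s * / sqrt mu * Q ^ 5).
    { apply Rmult_le_pos; [|auto]. apply Rmult_le_pos; [lra|]. left; apply Rinv_0_lt_compat; auto. }
    replace (2 * s * / sqrt mu * (Q * D) ^ 5) with (2 * s * / sqrt mu * Q ^ 5 * D ^ 5) by ring.
    replace ((Q * D) ^ 6) with (Q ^ 6 * D ^ 6) by ring.
    assert (2 * s * / sqrt mu * Q ^ 5 * D ^ 5 <= 2 * s * / sqrt mu * Q ^ 5 * D ^ 8) by (apply Rmult_le_compat_l; auto).
    assert (Q ^ 6 * D ^ 6 <= Q ^ 6 * D ^ 8) by (apply Rmult_le_compat_l; auto).
    assert (3 * mu + 1 <= (3 * mu + 1) * D ^ 8) by nra.
    assert (4 * mu * (3 * mu + 1 + Q ^ 6 * D ^ 6 + 2 * s * / sqrt mu * Q ^ 5 * D ^ 5)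
            <= 4 * mu * (3 * mu + 1 + Q ^ 6 + 2 * s * / sqrt mu * Q ^ 5) * D ^ 8).
    { replace (4 * mu * (3 * mu + 1 + Q ^ 6 + 2 * s * / sqrt mu * Q ^ 5) * D ^ 8) with
        (4 * mu * ((3 * mu + 1) * D^8 + Q ^ 6 * D^8 + 2 * s * / sqrt mu * Q ^ 5 * D ^ 8)) by ring.
      apply Rmult_le_compat_l; lra. }
    assert (4 * mu * (3 * mu + 1 + Q ^ 6 + 2 * s * / sqrt mu * Q ^ 5) * D ^ 8 <= Q ^ 8 / Rb * D ^ 8)
      by (apply Rmult_le_compat_r; lra).
    lra.
Qed.

Lemma density_nonneg b h C a c : 0 <= typeC_density b h C a c.
Proof. unfold typeC_density. unfold Rdiv. destruct (icard a c) eqn:E.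
  - simpl. rewrite Rinv_0, Rmult_0_r. lra.
  - apply Rmult_le_pos. apply pos_INR. left. apply Rinv_0_lt_compat. apply lt_0_INR. lia. Qed.

Lemma loss_mono b h n n' : (2 <= b)%nat -> (n <= n')%nat -> 0 < digit_mean b h -> loss b h n' <= loss b h n.
Proof.
  intros Hb Hnn Hmu. unfold loss.
  assert (HRb : 1 <= INR b) by (replace 1 with (INR 1) by reflexivity; apply le_INR; lia).
  apply le_INR in Hnn.
  assert (A1 : Rpower (INR b) (INR n / 4) <= Rpower (INR b) (INR n' / 4)) by (apply Rle_Rpower; lra).
  assert (A2 : Rpower (INR b) (INR n / 8) <= Rpower (INR b) (INR n' / 8)) by (apply Rle_Rpower; lra).
  assert (P1 : 0 < Rpower (INR b) (INR n / 4)) by (unfold Rpower; apply exp_pos).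
  assert (P2 : 0 < Rpower (INR b) (INR n / 8)) by (unfold Rpower; apply exp_pos).
  assert (Hr : 0 < sqrt (digit_mean b h)) by (apply sqrt_lt_R0; auto).
  assert (Hs : 0 <= digit_sd b h) by apply sqrt_pos.
  apply Rplus_le_compat.
  - unfold Rdiv. apply Rmult_le_compat_l; [lra|]. apply Rinv_le_contravar; lra.
  - unfold Rdiv. apply Rmult_le_compat_l; [lra|]. apply Rinv_le_contravar. nra.
    apply Rmult_le_compat_l; lra.
Qed.

Lemma iterate b h C n1 a1 c1 : (2 <= b)%nat -> h 0%nat = 0%nat -> h 1%nat = 1%nat -> (1 <= n1)%nat ->
  Bcond b h n1 -> strict_interval b n1 a1 c1 ->
  forall i, exists n a c, ((i + 1) * n1 <= n)%nat /\ Bcond b h n /\ strict_interval b n a c /\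
    typeC_density b h C a c >= typeC_density b h C a1 c1 * exp (- smR (fun j => loss b h (j * n1)) 1 i).
Proof.
  intros Hb H0 H1 Hn1 HB HS. induction i.
  - exists n1, a1, c1. split; [lia|]. split; [auto|]. split; [auto|]. change (smR (fun j => loss b h (j * n1)) 1 0) with 0. rewrite Ropp_0, exp_0. lra.
  - destruct IHi as [n [a [c [Hn [HBn [HSn Hd]]]]]].
    destruct (step b h C n a c Hb H0 H1 ltac:(nia) HBn HSn) as [n' [a' [c' [Hn' [HS' Hd']]]]].
    exists n', a', c'. split; [nia|]. split. apply (Bmono b h n n'); auto; nia. split; auto.
    assert (Hmu : 0 < digit_mean b h) by (pose proof (mu_b b h Hb H1); assert (0 < INR b) by (apply lt_0_INR; lia); nra).
    assert (Hl : loss b h n <= loss b h ((S i) * n1)) by (apply loss_mono; auto; nia).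
    replace (S i) with (i + 1)%nat by lia. rewrite smR_split. simpl smR. replace (1 + i)%nat with (i + 1)%nat by lia.
    rewrite Rplus_0_r.
    pose proof (density_nonneg b h C a1 c1).
    apply Rle_ge. apply Rge_le in Hd, Hd'.
    apply Rle_trans with (typeC_density b h C a c * exp (- loss b h n)); auto.
    rewrite Ropp_plus_distr, exp_plus, <- Rmult_assoc.
    apply Rmult_le_compat; auto.
    + apply Rmult_le_pos; auto. left; apply exp_pos.
    + left; apply exp_pos.
    + assert (Hl' : loss b h n <= loss b h (n1 + i * n1)) by (apply loss_mono; auto; nia).
      destruct Hl' as [Hlt|Heq]. left. apply exp_increasing. lra. rewrite Heq; lra.
Qed.

Lemma geom A s N : 1 < A -> smR (fun j => / A ^ j) s N = (/ A ^ s - / A ^ (s + N)) * A / (A - 1).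
Proof.
  intros HA. revert s. induction N; intros s.
  - simpl. rewrite Nat.add_0_r. unfold Rminus. rewrite Rplus_opp_r. unfold Rdiv. ring.
  - change (smR (fun j => / A ^ j) s (S N)) with (/ A ^ s + smR (fun j => / A ^ j) (S s) N).
    rewrite IHN. replace (S s + N)%nat with (s + S N)%nat by lia.
    assert (0 < A ^ s) by (apply pow_lt; lra). assert (0 < A ^ (s + S N)) by (apply pow_lt; lra).
    simpl. field. split; lra.
Qed.

Lemma geom_bound A N : 1 < A -> smR (fun j => / A ^ j) 1 N <= 1 / (A - 1).
Proof.
  intros HA. rewrite geom by auto. assert (0 < A ^ (1 + N)) by (apply pow_lt; lra).
  assert (0 <= / A ^ (1 + N)) by (left; apply Rinv_0_lt_compat; auto).
  replace (1 / (A - 1)) with (/ A ^ 1 * A / (A - 1)) by (simpl; field; split; lra).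
  unfold Rdiv. apply Rmult_le_compat_r. left; apply Rinv_0_lt_compat; lra.
  apply Rmult_le_compat_r; lra.
Qed.

Theorem theorem3p5 (b : nat) (h : nat -> nat) (C : nat -> Prop)
  (n1 a1 c1 : nat) :
  (1 < b)%nat ->
  h 0%nat = 0%nat -> h 1%nat = 1%nat ->
  (0 < n1)%nat ->
  (* (B1) *)
  4 * (1 + 3 * digit_mean b h
         + sqrt 2 * digit_sd b h * Rpower (INR b) (5 * INR n1 / 8))
    <= INR b ^ (n1 - 1) ->
  (* (B2) *)
  sqrt (3 * digit_mean b h * INR b) * digit_sd b h
    <= Rpower (INR b) (3 * INR n1 / 8) ->
  (* (B3) *)
  4 * digit_mean b h *
    (3 * digit_mean b h + 1 + Rpower (INR b) (3 * INR n1 / 4)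
     + 2 * digit_sd b h * / sqrt (digit_mean b h)
         * Rpower (INR b) (5 * INR n1 / 8))
    <= INR b ^ (n1 - 1) ->
  strict_interval b n1 a1 c1 ->
  forall N : nat, exists n a c : nat,
    (N < n)%nat /\ strict_interval b n a c /\
    typeC_density b h C a c >=
      typeC_density b h C a1 c1 *
      exp (- (2 / (Rpower (INR b) (INR n1 / 4) - 1))
           - 4 * digit_sd b h
             / (sqrt (digit_mean b h) * (Rpower (INR b) (INR n1 / 8) - 1))).
Proof.
  intros Hb H0 H1 Hn1 B1 _ B3 HS N.
  destruct (iterate b h C n1 a1 c1 ltac:(lia) H0 H1 ltac:(lia) (conj B1 B3) HS N) as [n [a [c [Hn [_ [HSn Hd]]]]]].
  exists n, a, c. split; [nia|]. split; auto.
  assert (HRb : 1 < INR b) by (replace 1 with (INR 1) by reflexivity; apply lt_INR; lia).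
  set (A4 := Rpower (INR b) (INR n1 / 4)). set (A8 := Rpower (INR b) (INR n1 / 8)).
  assert (HA4 : 1 < A4).
  { unfold A4. rewrite <- (Rpower_O (INR b)) at 1 by lra. apply Rpower_lt; auto.
    apply Rdiv_lt_0_compat; [apply lt_0_INR; lia|lra]. }
  assert (HA8 : 1 < A8).
  { unfold A8. rewrite <- (Rpower_O (INR b)) at 1 by lra. apply Rpower_lt; auto.
    apply Rdiv_lt_0_compat; [apply lt_0_INR; lia|lra]. }
  assert (Hmu : 0 < digit_mean b h) by (pose proof (mu_b b h ltac:(lia) H1); nra).
  set (r := sqrt (digit_mean b h)). set (s := digit_sd b h).
  assert (Hr : 0 < r) by (apply sqrt_lt_R0; auto).
  assert (Hs : 0 <= s) by apply sqrt_pos.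
  assert (Hsum : smR (fun j => loss b h (j * n1)) 1 N =
     2 * smR (fun j => / A4 ^ j) 1 N + 4 * s / r * smR (fun j => / A8 ^ j) 1 N).
  { rewrite <- !smR_scal, <- smR_add. apply smR_ext. intros j _. unfold loss.
    rewrite mult_INR.
    replace (INR j * INR n1 / 4) with (INR j * (INR n1 / 4)) by field.
    replace (INR j * INR n1 / 8) with (INR j * (INR n1 / 8)) by field.
    rewrite !RpQ by lra. fold A4 A8. fold r s.
    assert (0 < A4 ^ j) by (apply pow_lt; lra). assert (0 < A8 ^ j) by (apply pow_lt; lra).
    field. repeat split; lra. }
  assert (Hbound : smR (fun j => loss b h (j * n1)) 1 N <=
     2 / (A4 - 1) + 4 * s / (r * (A8 - 1))).
  { rewrite Hsum. pose proof (geom_bound A4 N HA4). pose proof (geom_bound A8 N HA8).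
    replace (2 / (A4 - 1)) with (2 * (1 / (A4 - 1))) by (field; lra).
    replace (4 * s / (r * (A8 - 1))) with (4 * s / r * (1 / (A8 - 1))) by (field; lra).
    assert (0 <= 4 * s / r) by (unfold Rdiv; apply Rmult_le_pos; [lra|left; apply Rinv_0_lt_compat; lra]).
    apply Rplus_le_compat. lra. apply Rmult_le_compat_l; auto. }
  pose proof (density_nonneg b h C a1 c1).
  apply Rle_ge. apply Rge_le in Hd.
  apply Rle_trans with (typeC_density b h C a1 c1 * exp (- smR (fun j => loss b h (j * n1)) 1 N)); auto.
  apply Rmult_le_compat_l; auto.
  replace (- (2 / (A4 - 1)) - 4 * s / (r * (A8 - 1))) with (- (2 / (A4 - 1) + 4 * s / (r * (A8 - 1)))) by ring.
  destruct Hbound as [Hlt|Heq]. left; apply exp_increasing; lra. rewrite Heq; lra.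
Qed.
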